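(* Let $S_{\mathrm{even}}$ (resp. $S_{\mathrm{odd}}$) be the set of the 24 consonant triads whose root is even (resp. odd). The functions $L$ and $R$ map $S_{\mathrm{even}}$ to itself and $S_{\mathrm{odd}}$ to itself, and the group of permutations of $S_{\mathrm{even}}$ generated by the restrictions of $L$ and $R$ is isomorphic to the dihedral group $D_{12}$ of order 24; likewise the group of permutations of $S_{\mathrm{odd}}$ generated by the restrictions of $L$ and $R$ is isomorphic to $D_{12}$.
   Context: Pitch classes are elements of $\mathbb{Z}_{24}$ (even residues: original tones; odd residues: new tones). For $n\in\mathbb{Z}_{24}$, $I_n(y)=-y+n\pmod{24}$, applied componentwise to ordered triples. Consonant triads are written as ordered triples: the major triad with root $x$ is $\langle x,x+8,x+14\rangle$ and the minor triad with root $x$ is $\langle x+14,x+6,x\rangle$ (underlying sets $\{x,x+8,x+14\}$ and $\{x,x+6,x+14\}$); there are 48 consonant triads. Define $L\langle y_1,y_2,y_3\rangle=I_{y_2+y_3}\langle y_1,y_2,y_3\rangle$ and $R\langle y_1,y_2,y_3\rangle=I_{y_1+y_2}\langle y_1,y_2,y_3\rangle$, which send consonant triads to consonant triads. $D_{12}$ denotes the group $\langle x,y\mid x^{12}=y^2=1,\ yxy=x^{-1}\rangle$ of order 24. *)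

(* Defs.v *)
From HB Require Import structures.
From mathcomp Require Import all_boot all_order all_algebra all_fingroup.
Set Implicit Arguments. Unset Strict Implicit. Unset Printing Implicit Defensive.
Import GRing.Theory.
Local Open Scope ring_scope.

Definition pc := 'Z_24.
Definition triad := (pc * pc * pc)%type.

Definition Ipc (n y : pc) : pc := - y + n.
Definition Itr (n : pc) (t : triad) : triad :=
  (Ipc n t.1.1, Ipc n t.1.2, Ipc n t.2).

Definition major (x : pc) : triad := (x, x + 8, x + 14).
Definition minor (x : pc) : triad := (x + 14, x + 6, x).

Definition Lop (t : triad) : triad := Itr (t.1.2 + t.2) t.
Definition Rop (t : triad) : triad := Itr (t.1.1 + t.1.2) t.

(* consonant triads with even / odd root (root parity read on the
   representative in {0,...,23}). *)
Definition S_even : {set triad} :=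
  [set t | [exists x : pc, ~~ odd (nat_of_ord x) && ((t == major x) || (t == minor x))]].
Definition S_odd : {set triad} :=
  [set t | [exists x : pc, odd (nat_of_ord x) && ((t == major x) || (t == minor x))]].

Definition SevenT := {t : triad | t \in S_even}.
Definition SoddT := {t : triad | t \in S_odd}.

(* Main.v *)
Require Import Defs.
From HB Require Import structures.
From mathcomp Require Import all_boot all_order all_algebra all_fingroup.
From mathcomp Require Import all_solvable.
From mathcomp Require Import ring.
Set Implicit Arguments. Unset Strict Implicit. Unset Printing Implicit Defensive.

Section Aux.
Import GRing.Theory.
Local Open Scope ring_scope.

Lemma LL t : Lop (Lop t) = t.
Proof. case: t => [[a b] c]; rewrite /Lop /Itr /Ipc /=; congr (_,_,_); ring. Qed.
Lemma RR t : Rop (Rop t) = t.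
Proof. case: t => [[a b] c]; rewrite /Rop /Itr /Ipc /=; congr (_,_,_); ring. Qed.

Definition RL t := Rop (Lop t).

Definition Pfacts (x : pc) := [&& Lop (major x) == minor (x+8), Lop (minor x) == major (x-8),
  Rop (major x) == minor (x-6) & Rop (minor x) == major (x+6)] &&
  ([&& odd (nat_of_ord (x+8)) == odd x, odd (nat_of_ord (x-8)) == odd x,
  odd (nat_of_ord (x+6)) == odd x & odd (nat_of_ord (x-6)) == odd x] &&
  ((iter 12 RL (major x) == major x) && (iter 12 RL (minor x) == minor x))).

Lemma facts x : Pfacts x.
Proof. case: x => n Hn; do 24! (case: n Hn => [|n] Hn; first exact: erefl); done. Qed.

Definition Sb (b : bool) : {set triad} :=
  [set t | [exists x : pc, (odd (nat_of_ord x) == b) && ((t == major x) || (t == minor x))]].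

Lemma S_evenE : S_even = Sb false.
Proof.
apply/setP => t; rewrite !inE; apply: eq_existsb => x; by case: (odd _).
Qed.
Lemma S_oddE : S_odd = Sb true.
Proof.
apply/setP => t; rewrite !inE; apply: eq_existsb => x; by case: (odd _).
Qed.

Lemma SbP b t : reflect (exists x : pc, odd (nat_of_ord x) = b /\ (t = major x \/ t = minor x)) (t \in Sb b).
Proof.
rewrite inE; apply: (iffP existsP) => [[x /andP[/eqP Ho /orP[/eqP->|/eqP->]]]|[x [Ho [->|->]]]];
  exists x; rewrite ?Ho ?eqxx ?orbT //; by [split => //; left | split => //; right].
Qed.

Lemma Sb_L b t : t \in Sb b -> Lop t \in Sb b.
Proof.
move=> /SbP [x [Ho [->|->]]]; have := facts x;
  case/andP => /and4P[/eqP l1 /eqP l2 _ _] /andP[/and4P[/eqP o1 /eqP o2 _ _] _]; apply/SbP.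
  by exists (x + 8); rewrite o1 l1; split => //; right.
by exists (x - 8); rewrite o2 l2; split => //; left.
Qed.

Lemma Sb_R b t : t \in Sb b -> Rop t \in Sb b.
Proof.
move=> /SbP [x [Ho [->|->]]]; have := facts x;
  case/andP => /and4P[_ _ /eqP l1 /eqP l2] /andP[/and4P[_ _ /eqP o1 /eqP o2] _]; apply/SbP.
  by exists (x - 6); rewrite o2 l1; split => //; right.
by exists (x + 6); rewrite o1 l2; split => //; left.
Qed.

Lemma Sb_iter b t : t \in Sb b -> iter 12 RL t = t.
Proof.
move=> /SbP [x [_ [->|->]]]; have := facts x;
  case/andP => _ /andP[_ /andP[/eqP h1 /eqP h2]] //.
Qed.

End Aux.

Local Open Scope group_scope.

Lemma card_inv_gen (gT : finGroupType) (x y : gT) :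
  #[x] = 2 -> #[y] = 2 -> x != y -> #|<<[set x; y]>>| = (#[x * y]).*2.
Proof.
set G := <<[set x; y]>>.
move=> ox oy ne_x_y; pose q := #[x * y].
have q_gt1: q > 1 by rewrite order_gt1 -eq_invg_mul invg_expg ox.
have homG: G \homg 'D_q.*2.
  rewrite Grp'_dihedral //; apply/existsP; exists (x, y); rewrite /= !xpair_eqE.
  by rewrite joing_idl joing_idr -{1}ox -oy !expg_order !eqxx.
have: #|G| %| q.*2  by rewrite -card_dihedral ?card_homg.
have Gxy: <[x * y]> \subset G.
  by rewrite cycle_subG groupM ?mem_gen ?set21 ?set22.
have[k oG]: exists k, #|G| = (k * q)%N by apply/dvdnP; rewrite cardSg.
rewrite oG -mul2n dvdn_pmul2r ?order_gt0 ?dvdn_divisors // !inE /=.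
case/pred2P=> [k1 | -> //]; case/negP: ne_x_y.
have cycG: cyclic G.
  apply/cyclicP; exists (x * y); apply/eqP.
  by rewrite eq_sym eqEcard Gxy oG k1 mul1n leqnn.
have: <[x]> == <[y]>.
  by rewrite (eq_subG_cyclic cycG) ?genS ?subsetUl ?subsetUr -?orderE ?ox ?oy.
by rewrite eqEcard cycle_subG /= cycle2g // !inE -order_eq1 ox; case/andP.
Qed.

Lemma dih12 (gT : finGroupType) (x y : gT) :
  #[x] = 2 -> #[y] = 2 -> x != y -> #[x * y] = 12 ->
  <<[set x; y]>> \isog Grp (x : y : (x ^+ 12, y ^+ 2, x ^ y = x^-1)).
Proof.
move=> ox oy ne oxy.
have iso := involutions_gen_dihedral ox oy ne.
rewrite card_inv_gen // oxy in iso.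
apply: isoGrp_trans iso _.
exact: (@Grp_dihedral 12).
Qed.

Lemma order2 (gT : finGroupType) (p : gT) : p ^+ 2 = 1 -> p != 1 -> #[p] = 2.
Proof.
move=> h2 h1.
have d : #[p] %| 2 by rewrite order_dvdn h2.
have n1 : #[p] != 1%N by rewrite order_eq1.
move: #[p] d n1 => n; case: n => [|[|[|n]]] //.
Qed.

Lemma order12 (gT : finGroupType) (p : gT) :
  p ^+ 12 = 1 -> p ^+ 6 != 1 -> p ^+ 4 != 1 -> #[p] = 12.
Proof.
move=> h12 h6 h4.
have d : #[p] %| 12 by rewrite order_dvdn h12.
have d6 : ~~ (#[p] %| 6) by rewrite order_dvdn.
have d4 : ~~ (#[p] %| 4) by rewrite order_dvdn.
have le := dvdn_leq (isT : 0 < 12)%N d.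
move: #[p] d d6 d4 le => n.
by case: n => [|[|[|[|[|[|[|[|[|[|[|[|[|n]]]]]]]]]]]]].
Qed.

Lemma generic (T : finType) (v : T -> triad) (vinj : injective v)
  (pL pR : {perm T}) (HL : forall s, v (pL s) = Lop (v s))
  (HR : forall s, v (pR s) = Rop (v s)) (b : bool)
  (HS : forall s, v s \in Sb b) (s0 : T)
  (H0 : [&& Lop (v s0) != v s0, Rop (v s0) != v s0, Lop (v s0) != Rop (v s0),
          iter 6 RL (v s0) != v s0 & iter 4 RL (v s0) != v s0]) :
  <<[set pL; pR]>> \isog Grp (x : y : (x ^+ 12, y ^+ 2, x ^ y = x^-1)).
Proof.
case/and5P: H0 => a1 a2 a3 a4 a5.
have iterv k s : v (((pL * pR) ^+ k) s) = iter k RL (v s).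
  rewrite permX; elim: k => //= k IH; by rewrite permM HR HL IH.
apply: dih12.
- apply: order2.
    by apply/permP => s; rewrite perm1; apply: vinj; rewrite expgS expg1 permM !HL LL.
  by apply/eqP => /permP /(_ s0); rewrite perm1 => /(congr1 v); rewrite HL; apply/eqP.
- apply: order2.
    by apply/permP => s; rewrite perm1; apply: vinj; rewrite expgS expg1 permM !HR RR.
  by apply/eqP => /permP /(_ s0); rewrite perm1 => /(congr1 v); rewrite HR; apply/eqP.
- by apply/eqP => /permP /(_ s0) /(congr1 v); rewrite HL HR; apply/eqP.
apply: order12.
- by apply/permP => s; rewrite perm1; apply: vinj; rewrite iterv (Sb_iter (HS s)).
- by apply/eqP => /permP /(_ s0); rewrite perm1 => /(congr1 v); rewrite iterv; apply/eqP.
- by apply/eqP => /permP /(_ s0); rewrite perm1 => /(congr1 v); rewrite iterv; apply/eqP.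
Qed.

Lemma Le t : t \in S_even -> Lop t \in S_even.
Proof. by rewrite S_evenE; apply: Sb_L. Qed.
Lemma Re t : t \in S_even -> Rop t \in S_even.
Proof. by rewrite S_evenE; apply: Sb_R. Qed.
Lemma Lo t : t \in S_odd -> Lop t \in S_odd.
Proof. by rewrite S_oddE; apply: Sb_L. Qed.
Lemma Ro t : t \in S_odd -> Rop t \in S_odd.
Proof. by rewrite S_oddE; apply: Sb_R. Qed.

Definition fLe (s : SevenT) : SevenT := exist _ (Lop (val s)) (Le (valP s)).
Definition fRe (s : SevenT) : SevenT := exist _ (Rop (val s)) (Re (valP s)).
Definition fLo (s : SoddT) : SoddT := exist _ (Lop (val s)) (Lo (valP s)).
Definition fRo (s : SoddT) : SoddT := exist _ (Rop (val s)) (Ro (valP s)).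

Lemma fLe_inj : injective fLe.
Proof. apply: (can_inj (g := fLe)) => s; apply: val_inj; exact: LL. Qed.
Lemma fRe_inj : injective fRe.
Proof. apply: (can_inj (g := fRe)) => s; apply: val_inj; exact: RR. Qed.
Lemma fLo_inj : injective fLo.
Proof. apply: (can_inj (g := fLo)) => s; apply: val_inj; exact: LL. Qed.
Lemma fRo_inj : injective fRo.
Proof. apply: (can_inj (g := fRo)) => s; apply: val_inj; exact: RR. Qed.

Lemma s0e_in : major 0%R \in S_even.
Proof. rewrite S_evenE; apply/SbP; exists 0%R; split => //; by left. Qed.
Lemma s0o_in : major 1%R \in S_odd.
Proof. rewrite S_oddE; apply/SbP; exists 1%R; split => //; by left. Qed.

Theorem mainTheorem7 :
  ((forall t, t \in S_even -> Lop t \in S_even) /\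
   (forall t, t \in S_even -> Rop t \in S_even) /\
   (forall t, t \in S_odd -> Lop t \in S_odd) /\
   (forall t, t \in S_odd -> Rop t \in S_odd)) /\
  (exists pL pR : {perm SevenT},
     (forall s, val (pL s) = Lop (val s)) /\
     (forall s, val (pR s) = Rop (val s)) /\
     (<<[set pL; pR]>> \isog Grp (x : y : (x ^+ 12, y ^+ 2, x ^ y = x^-1)))) /\
  (exists pL pR : {perm SoddT},
     (forall s, val (pL s) = Lop (val s)) /\
     (forall s, val (pR s) = Rop (val s)) /\
     (<<[set pL; pR]>> \isog Grp (x : y : (x ^+ 12, y ^+ 2, x ^ y = x^-1)))).
Proof.
split; first by split; [exact: Le | split; [exact: Re | split; [exact: Lo | exact: Ro]]].
split.
  have HL s : val (perm fLe_inj s) = Lop (val s) by rewrite permE.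
  have HR s : val (perm fRe_inj s) = Rop (val s) by rewrite permE.
  exists (perm fLe_inj), (perm fRe_inj); split => //; split => //.
  apply: (@generic _ val val_inj _ _ HL HR false _ (exist (fun t => t \in S_even) _ s0e_in)).
    by move=> s; rewrite -S_evenE; exact: valP.
  exact: erefl.
have HL s : val (perm fLo_inj s) = Lop (val s) by rewrite permE.
have HR s : val (perm fRo_inj s) = Rop (val s) by rewrite permE.
exists (perm fLo_inj), (perm fRo_inj); split => //; split => //.
apply: (@generic _ val val_inj _ _ HL HR true _ (exist (fun t => t \in S_odd) _ s0o_in)).
  by move=> s; rewrite -S_oddE; exact: valP.
exact: erefl.
Qed.
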